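(* Let $G=(\mathcal{V},\mathcal{E})$ be a connected undirected graph on $\mathcal{V}=\{1,\dots,n\}$, let $\mathcal{V}_c\subseteq\mathcal{V}$ be a set of corrupt nodes, $\mathcal{V}_h=\mathcal{V}\setminus\mathcal{V}_c$, and let $G_h=(\mathcal{V}_h,\mathcal{E}_h)$ be the subgraph induced on the honest nodes, with connected components having vertex sets $\mathcal{V}_{h,1},\dots,\mathcal{V}_{h,k_h}$. Consider any (message-passing) protocol on $G$ in which each node $j$ has a real input $s_j$ and private randomness $r_j$; in each round, every node sends to each of its neighbours a message that is a function of its input, its randomness and all messages it has received so far; at the end every node outputs a function of its input, randomness and received messages. Suppose the protocol is correct: for every choice of inputs and randomness, every node outputs $\sum_{j=1}^n s_j$. Define the view of the adversary in an execution as the inputs and randomness of the nodes in $\mathcal{V}_c$, all messages received by nodes in $\mathcal{V}_c$, and the output. Then for each $k=1,\dots,k_h$ the partial sum $\sum_{j\in\mathcal{V}_{h,k}}s_j$ is determined by the adversary's view: any two executions producing the same adversary view have the same value of $\sum_{j\in\mathcal{V}_{h,k}}s_j$ for every $k$.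
   Context: $\mathcal{E}_h=\{\{i,j\}\in\mathcal{E}: i,j\in\mathcal{V}_h\}$. Messages travel only along edges of $G$. *)

(* Defs.v *)
From HB Require Import structures.
From mathcomp Require Import all_boot all_order all_algebra.
From mathcomp Require Import reals.
Set Implicit Arguments. Unset Strict Implicit. Unset Printing Implicit Defensive.
Import Order.TTheory GRing.Theory Num.Theory.
Local Open Scope ring_scope.

(* Nodes are 'I_n (i.e. {0,..,n-1}, standing for {1,..,n}).
   A graph is an edge relation e : rel 'I_n. *)
Definition simple_undirected_graph (n : nat) (e : rel 'I_n) : Prop :=
  (forall x y, e x y = e y x) /\ (forall x, ~~ e x x).

Definition connected_graph (n : nat) (e : rel 'I_n) : Prop :=
  forall x y, connect e x y.

Definition honest_rel (n : nat) (e : rel 'I_n) (Vc : {set 'I_n}) : rel 'I_n :=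
  [rel x y | [&& e x y, x \notin Vc & y \notin Vc]].

Definition honest_component (n : nat) (e : rel 'I_n) (Vc : {set 'I_n})
  (i : 'I_n) : {set 'I_n} :=
  [set j | (j \notin Vc) && connect (honest_rel e Vc) i j].

(* What a node has received in one round: for each possible sender j,
   Some m if j is a neighbour and sent m, None otherwise. *)
Definition round_msgs (n : nat) (M : Type) := {ffun 'I_n -> option M}.

(* A (deterministic given inputs and randomness) message-passing protocol.
   send t i j s r h : message sent in round t by node i to node j, as a
   function of i's input s, randomness r and history h of all messages
   received by i in rounds 0..t-1.
   out i s r h : output of node i from its input, randomness and the full
   history of received messages. *)
Record protocol (n : nat) (R Rnd M : Type) := Protocol {
  send : nat -> 'I_n -> 'I_n -> R -> Rnd -> seq (round_msgs n M) -> M;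
  out : 'I_n -> R -> Rnd -> seq (round_msgs n M) -> R
}.

Fixpoint history (n : nat) (R Rnd M : Type) (e : rel 'I_n)
  (P : protocol n R Rnd M) (s : 'I_n -> R) (r : 'I_n -> Rnd) (t : nat)
  : 'I_n -> seq (round_msgs n M) :=
  match t with
  | 0 => fun _ => [::]
  | t'.+1 => fun i =>
      rcons (history e P s r t' i)
        [ffun j => if e j i then Some (send P t' j i (s j) (r j)
                                       (history e P s r t' j))
                   else None]
  end.

Definition output (n : nat) (R Rnd M : Type) (e : rel 'I_n)
  (P : protocol n R Rnd M) (T : nat) (s : 'I_n -> R) (r : 'I_n -> Rnd)
  (i : 'I_n) : R :=
  out P i (s i) (r i) (history e P s r T i).

Definition correct_sum (n : nat) (R : numDomainType) (Rnd M : Type)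
  (e : rel 'I_n) (P : protocol n R Rnd M) (T : nat) : Prop :=
  forall (s : 'I_n -> R) (r : 'I_n -> Rnd) (i : 'I_n),
    output e P T s r i = \sum_(j < n) s j.

Definition same_view (n : nat) (R Rnd M : Type) (e : rel 'I_n)
  (P : protocol n R Rnd M) (T : nat) (Vc : {set 'I_n})
  (s1 s2 : 'I_n -> R) (r1 r2 : 'I_n -> Rnd) : Prop :=
  (forall i, i \in Vc -> s1 i = s2 i) /\
  (forall i, i \in Vc -> r1 i = r2 i) /\
  (forall i, i \in Vc -> history e P s1 r1 T i = history e P s2 r2 T i) /\
  (forall i, output e P T s1 r1 i = output e P T s2 r2 i).

(* Main.v *)
Require Import Defs.
From HB Require Import structures.
From mathcomp Require Import all_boot all_order all_algebra.
From mathcomp Require Import reals.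
Import Order.TTheory GRing.Theory Num.Theory.
Local Open Scope ring_scope.

Lemma hist_prefix (n : nat) (R Rnd M : Type) (e : rel 'I_n)
  (P : protocol n R Rnd M) s1 r1 s2 r2 (t d : nat) (j : 'I_n) :
  history e P s1 r1 (t + d) j = history e P s2 r2 (t + d) j ->
  history e P s1 r1 t j = history e P s2 r2 t j.
Proof.
elim: d => [|d IH]; first by rewrite addn0.
rewrite addnS /= => /rcons_inj [] H _; exact: IH.
Qed.

Theorem proposition1 (R : realType) (n : nat) (e : rel 'I_n)
  (Vc : {set 'I_n}) (Rnd M : Type) (P : protocol n R Rnd M) (T : nat) :
  simple_undirected_graph e ->
  connected_graph e ->
  correct_sum e P T ->
  forall (s1 s2 : 'I_n -> R) (r1 r2 : 'I_n -> Rnd),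
    same_view e P T Vc s1 s2 r1 r2 ->
    forall i : 'I_n, i \notin Vc ->
      \sum_(j in honest_component e Vc i) s1 j =
      \sum_(j in honest_component e Vc i) s2 j.
Proof.
move=> [esym _] _ Hc s1 s2 r1 r2 [Hs [Hr [Hh Ho]]] i iVc.
set C := honest_component e Vc i.
have CVc : forall j, j \in C -> j \notin Vc by move=> j; rewrite inE => /andP[].
have nb1 : forall j k, j \in C -> e k j -> k \notin Vc -> k \in C.
  move=> j k; rewrite !inE => /andP[jV cij] ekj kV; rewrite kV /=.
  apply: (connect_trans cij); apply: connect1; apply/and3P; split => //; by rewrite esym.
have nb2 : forall j k, k \in C -> e k j -> j \notin Vc -> j \in C.
  move=> j k; rewrite !inE => /andP[kV cik] ekj jV; rewrite jV /=.
  apply: (connect_trans cik); apply: connect1; by apply/and3P.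
have Hpre : forall t j, (t <= T)%N -> j \in Vc ->
    history e P s1 r1 t j = history e P s2 r2 t j.
  move=> t j tT jV; apply: (@hist_prefix _ _ _ _ _ _ _ _ _ _ t (T - t)).
  by rewrite subnKC //; apply: Hh.
pose ss := fun j => if j \in C then s1 j else s2 j.
pose rr := fun j => if j \in C then r1 j else r2 j.
have Hmix : forall t, (t <= T)%N -> forall j, history e P ss rr t j =
   if j \in C then history e P s1 r1 t j else history e P s2 r2 t j.
  elim=> [|t IH] tT j /=; first by case: ifP.
  have tT' : (t <= T)%N by apply: ltnW.
  rewrite IH //.
  case jC: (j \in C).
    congr rcons; apply/ffunP => k; rewrite !ffunE.
    case ekj: (e k j) => //; congr Some.
    rewrite IH // /ss /rr.
    case kC: (k \in C) => //.
    have kV : k \in Vc.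
      by apply/negPn/negP => kV; rewrite (nb1 j k) in kC.
    by rewrite Hs // Hr // Hpre.
  congr rcons; apply/ffunP => k; rewrite !ffunE.
  case ekj: (e k j) => //; congr Some.
  rewrite IH // /ss /rr.
  case kC: (k \in C) => //.
  have jV : j \in Vc.
    by apply/negPn/negP => jV; rewrite (nb2 j k) in jC.
  have := Hpre t.+1 j tT jV => /= /rcons_inj [] _ /ffunP /(_ k).
  by rewrite !ffunE ekj => -[].
have iC : i \in C by rewrite inE iVc connect0.
have E1 : \sum_(j < n) ss j = \sum_(j < n) s1 j.
  rewrite -(Hc ss rr i) -(Hc s1 r1 i) /output Hmix // iC /ss /rr iC //.
have E2 : \sum_(j < n) s1 j = \sum_(j < n) s2 j by rewrite -(Hc s1 r1 i) -(Hc s2 r2 i).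
have split : forall f : 'I_n -> R, \sum_(j < n) f j =
    \sum_(j in C) f j + \sum_(j < n | j \notin C) f j.
  by move=> f; rewrite (bigID (fun j => j \in C)).
move: E1 E2; rewrite !split.
have -> : \sum_(j in C) ss j = \sum_(j in C) s1 j.
  by apply: eq_bigr => j jC; rewrite /ss jC.
have -> : \sum_(j < n | j \notin C) ss j = \sum_(j < n | j \notin C) s2 j.
  by apply: eq_bigr => j /negbTE jC; rewrite /ss jC.
move=> /addrI E1 E2.
by move: E2; rewrite E1 => /addIr.
Qed.
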